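(* There is an absolute constant $c>0$ such that for every star celebrity game $\Gamma=\langle V,(w_u)_{u\in V},\alpha,\beta\rangle$ with $\beta>1$ and $W=\sum_{u\in V}w_u$, $PoA(\Gamma)\le c\,W/\alpha$.
   Context: A celebrity game $\Gamma=\langle V,(w_u)_{u\in V},\alpha,\beta\rangle$ consists of a set of players $V=\{1,\dots,n\}$, celebrity weights $w_u>0$, a link cost $\alpha>0$ and a critical distance $\beta$ with $1\le\beta\le n-1$. A strategy of player $u$ is a set $S_u\subseteq V\setminus\{u\}$; a strategy profile is $S=(S_1,\dots,S_n)$; its outcome graph $G[S]$ is the undirected graph on $V$ with edge set $\{\{u,v\}: u\in S_v\text{ or }v\in S_u\}$. With $d_G$ the graph distance (infinite between different connected components), the cost of player $u$ is $c_u(S)=\alpha|S_u|+\sum_{v:\,d_{G[S]}(u,v)>\beta}w_v$ and the social cost is $C(S)=\sum_{u\in V}c_u(S)$. $S$ is a Nash equilibrium (NE) if no player can strictly decrease its cost by changing only its own strategy. $\mathrm{opt}(\Gamma)=\min_S C(S)$ and $PoA(\Gamma)=\max_{S\text{ NE}}C(S)/\mathrm{opt}(\Gamma)$. $\Gamma$ is a star celebrity game if $G[S]$ is connected for some NE $S$. *)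

(* Defs.v *)
From HB Require Import structures.
From mathcomp Require Import all_boot all_order all_algebra.
Set Implicit Arguments. Unset Strict Implicit. Unset Printing Implicit Defensive.
Import Order.TTheory GRing.Theory Num.Theory.
Local Open Scope ring_scope.

Definition profile (n : nat) := {ffun 'I_n -> {set 'I_n}}.

Definition valid n (S : profile n) : bool := [forall u, u \notin S u].

Definition adj n (S : profile n) : rel 'I_n :=
  fun u v => (v \in S u) || (u \in S v).

Definition dist_le n (S : profile n) (u v : 'I_n) (k : nat) : bool :=
  [exists m : 'I_k.+1, [exists p : (m : nat).-tuple 'I_n,
     path (adj S) u p && (last u p == v)]].

Definition connected_outcome n (S : profile n) : Prop :=
  forall u v : 'I_n, connect (adj S) u v.

Section Game.
Variables (R : realFieldType) (n : nat) (w : 'I_n -> R) (alpha : R) (beta : nat).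

Definition cost (S : profile n) (u : 'I_n) : R :=
  alpha * (#|S u|)%:R + \sum_(v | ~~ dist_le S u v beta) w v.

Definition social_cost (S : profile n) : R := \sum_u cost S u.

Definition deviate (S : profile n) (u : 'I_n) (T : {set 'I_n}) : profile n :=
  [ffun v => if v == u then T else S v].

Definition is_NE (S : profile n) : bool :=
  valid S && [forall u, forall T : {set 'I_n},
     (u \notin T) ==> (cost S u <= cost (deviate S u T) u)].

Definition empty_profile : profile n := [ffun => set0].

(* opt = min over all strategy profiles (the empty profile is one of them) *)
Definition opt : R :=
  \big[Num.min/social_cost empty_profile]_(S : profile n | valid S) social_cost S.

(* PoA = max over NE of C(S)/opt (all ratios are >= 0) *)
Definition PoA : R :=
  \big[Num.max/0]_(S : profile n | is_NE S) (social_cost S / opt).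

Definition star_game : Prop :=
  exists S : profile n, is_NE S /\ connected_outcome S.

End Game.

(* Main.v *)
Require Import Defs.
From HB Require Import structures.
From mathcomp Require Import all_boot all_order all_algebra.
From mathcomp Require Import ring lra.
Import Order.TTheory GRing.Theory Num.Theory.
Local Open Scope ring_scope.

Section Aux.
Variables (R : realFieldType) (n : nat) (w : 'I_n -> R) (alpha : R) (beta : nat).
Hypothesis wpos : forall u, 0 < w u.
Hypothesis apos : 0 < alpha.

Lemma sub_sum (P Q : pred 'I_n) : (forall v, P v -> Q v) ->
  \sum_(v | P v) w v <= \sum_(v | Q v) w v.
Proof.
move=> PQ; rewrite [X in X <= _]big_mkcond [X in _ <= X]big_mkcond /=.
apply: ler_sum => v _; case: (boolP (P v)) => Pv; first by rewrite PQ.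
by case: (Q v) => //; apply: ltW.
Qed.

Lemma far_le (S : profile n) u :
  \sum_(v | ~~ dist_le S u v beta) w v <= \sum_(v < n) w v.
Proof. by apply: sub_sum. Qed.

Lemma far_ge0 (S : profile n) u : 0 <= \sum_(v | ~~ dist_le S u v beta) w v.
Proof. by apply: sumr_ge0 => v _; apply: ltW. Qed.

Lemma NE_cost_le (S : profile n) u : is_NE w alpha beta S ->
  cost w alpha beta S u <= \sum_(v < n) w v.
Proof.
case/andP=> _ /forallP /(_ u) /forallP /(_ set0) /implyP H.
have H0 := H (negbT (in_set0 u)). apply: le_trans; first exact: H0.
rewrite /cost /deviate ffunE eqxx cards0 mulr0 add0r; exact: far_le.
Qed.

Lemma sc_le (S : profile n) : is_NE w alpha beta S ->
  social_cost w alpha beta S <= n%:R * \sum_(v < n) w v.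
Proof.
move=> NE; rewrite /social_cost.
apply: (@le_trans _ _ (\sum_(u < n) \sum_(v < n) w v)).
  by apply: ler_sum => u _; apply: NE_cost_le.
by rewrite sumr_const card_ord mulr_natl.
Qed.

Lemma alpha_le_W : (1 < n)%N -> star_game w alpha beta ->
  alpha <= \sum_(v < n) w v.
Proof.
move=> n2 [S [NE con]].
have [u [v vin]] : exists u v, v \in S u.
  pose x := Ordinal (ltn_trans (ltnSn 0) n2); pose y := Ordinal n2.
  have /connectP [p pth ely] := con x y.
  case: p pth ely => [|z p] /=.
    by move=> _ /(congr1 val).
  case/andP=> /orP [] H _ _; [by exists x, z | by exists z, x].
move: (NE) => /andP [/forallP /(_ u) uS /forallP /(_ u) /forallP /(_ (S u :\ v)) /implyP H].
have := H; rewrite in_setD (negbTE uS) andbF => /(_ isT).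
rewrite /cost /deviate ffunE eqxx.
rewrite [#|S u|](cardsD1 v) vin natrD /=.
have := far_ge0 S u; have := far_le [ffun v0 => if v0 == u then S u :\ v else S v0] u.
move=> h1 h2 h3; nra.
Qed.


Definition iso (S : profile n) u := (S u == set0) && [forall x, u \notin S x].

Lemma iso_far (S : profile n) u v : iso S u -> v != u -> ~~ dist_le S u v beta.
Proof.
case/andP=> /eqP Su0 /forallP nS vu.
apply/negP => /existsP [m /existsP [p /andP [pth /eqP lp]]].
move: pth lp; case: p => [[|z q] _] /=.
  by move=> _ /eqP; rewrite eq_sym (negbTE vu).
by rewrite /adj Su0 in_set0 (negbTE (nS z)).
Qed.

Lemma far_iso (S : profile n) u : iso S u ->
  \sum_(v < n) w v - w u <= \sum_(v | ~~ dist_le S u v beta) w v.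
Proof.
move=> iu; rewrite (bigD1 u) //= addrC addrK.
by apply: sub_sum => v; apply: iso_far.
Qed.

Lemma sum_ge_term (f : 'I_n -> R) x : (forall y, 0 <= f y) -> f x <= \sum_y f y.
Proof.
move=> f0; rewrite (bigD1 x) //= lerDl; apply: sumr_ge0 => y _; exact: f0.
Qed.

Lemma sc_ge (S : profile n) : alpha <= \sum_(v<n) w v ->
  alpha * (n%:R - 1) <= 2 * social_cost w alpha beta S.
Proof.
move=> aW; set W := \sum_(v<n) w v.
pose far u := \sum_(v | ~~ dist_le S u v beta) w v.
pose cS := \sum_u ((#|S u|)%:R : R).
pose K := \sum_u ((iso S u : nat)%:R : R).
pose F := \sum_u far u.
have scE : social_cost w alpha beta S = alpha * cS + F.
  by rewrite /social_cost /cost big_split /= mulr_sumr.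
have hF0 : 0 <= F by apply: sumr_ge0 => u _; apply: far_ge0.
have hF : K * W - W <= F.
  have -> : K * W - W = \sum_u ((iso S u : nat)%:R * W - w u).
    by rewrite sumrB mulr_suml.
  apply: ler_sum => u _; case: (boolP (iso S u)) => iu /=.
    by rewrite mul1r; apply: far_iso.
  rewrite mul0r add0r; apply: le_trans (far_ge0 S u).
  by rewrite oppr_le0; apply: ltW.
have hcard : forall x : 'I_n, \sum_u ((u \in S x : nat)%:R : R) = (#|S x|)%:R.
  move=> x; rewrite -natr_sum; congr (_%:R).
  rewrite -sum1_card [RHS]big_mkcond /=. apply: eq_bigr => i _; by case: (i \in S x).
have hN : n%:R - K <= 2 * cS.
  have -> : n%:R - K = \sum_u (1 - (iso S u : nat)%:R).
    by rewrite sumrB sumr_const card_ord.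
  have -> : 2 * cS = \sum_u ((#|S u|)%:R + \sum_x ((u \in S x : nat)%:R)).
    rewrite big_split /= exchange_big /=.
    under [X in _ = _ + X]eq_bigr => x _ do rewrite hcard.
    by rewrite mulr2n mulrDl mul1r.
  apply: ler_sum => u _; case: (boolP (iso S u)) => iu /=.
    rewrite subrr; apply: addr_ge0 => //; apply: sumr_ge0 => x _; exact: ler0n.
  rewrite subr0; move: iu; rewrite /iso negb_and => /orP [Su|].
    apply: (@le_trans _ _ (#|S u|%:R)); first by rewrite ler1n card_gt0.
    by rewrite lerDl; apply: sumr_ge0 => x _; exact: ler0n.
  rewrite negb_forall => /existsP [x]; rewrite negbK => ux.
  rewrite addrC; apply: (@le_trans _ _ (\sum_x0 ((u \in S x0 : nat)%:R : R))).
    have := @sum_ge_term (fun x0 => ((u \in S x0 : nat)%:R : R)) x.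
    by rewrite ux; apply => y; exact: ler0n.
  by rewrite lerDl; exact: ler0n.
rewrite scE.
have [k Kk] : exists k : nat, K = k%:R by exists (\sum_u (iso S u : nat))%N; rewrite natr_sum.
clearbody F cS K.
rewrite Kk in hF hN.
case: k Kk hF hN => [|k] _ hF hN.
  rewrite ?mulr0n ?subr0 in hN hF.
  have h1 := hN; rewrite -subr_ge0 in h1.
  have := mulr_ge0 (ltW apos) h1=> hh.
  have key : forall a c f N0 : R, 0 < a -> 0 <= f -> 0 <= a*(2*c - N0) ->
    a*(N0-1) <= 2*(a*c+f) by move=> a c f N0 ha hf hc; nra.
  exact: key.
have k0 : 0 <= (k.+1)%:R - 1 :> R by rewrite subr_ge0 ler1n.
have h2 : 0 <= W - alpha by rewrite subr_ge0.
have := mulr_ge0 k0 h2; have := ltW apos.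
have h1 := hN; rewrite -subr_ge0 in h1.
  have := mulr_ge0 (ltW apos) h1; nra.
Qed.

End Aux.

Theorem lemma1 :
  exists c : nat, (0 < c)%N /\
  forall (R : realFieldType) (n : nat) (w : 'I_n -> R) (alpha : R) (beta : nat),
    (forall u, 0 < w u) -> 0 < alpha ->
    (1 <= beta <= n.-1)%N -> (1 < beta)%N ->
    star_game w alpha beta ->
    PoA w alpha beta <= c%:R * (\sum_(u < n) w u) / alpha.
Proof.
exists 4%N; split=> // R n w alpha beta wpos apos /andP [b1 bn] b2 star.
have n2 : (1 < n)%N := leq_trans (leq_trans b2 bn) (leq_pred n).
have aW := @alpha_le_W R n w alpha beta wpos n2 star.
have W0 : 0 <= \sum_(u < n) w u by apply: sumr_ge0 => u _; apply: ltW.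
set W := \sum_(u < n) w u in aW W0 *.
have nR : 2%:R <= n%:R :> R by rewrite ler_nat.
have optge : alpha * (n%:R - 1) / 2 <= opt w alpha beta.
  rewrite /opt; apply: (big_ind (fun x => alpha * (n%:R - 1) / 2 <= x)).
  - have := @sc_ge R n w alpha beta wpos apos (empty_profile n) aW; lra.
  - by move=> x y hx hy; rewrite le_min hx hy.
  - move=> S _; have := @sc_ge R n w alpha beta wpos apos S aW; lra.
have lbpos : 0 < alpha * (n%:R - 1) / 2.
  apply: divr_gt0 => //; apply: mulr_gt0 => //; lra.
have optpos := lt_le_trans lbpos optge.
have B0 : 0 <= 4%:R * W / alpha by apply: divr_ge0 => //; [apply: mulr_ge0 | apply: ltW].
rewrite /PoA; apply: (big_ind (fun x => x <= 4%:R * W / alpha)) => //.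
  by move=> x y hx hy; rewrite ge_max hx hy.
move=> S NE; rewrite ler_pdivrMr //.
have hS := @sc_le R n w alpha beta wpos S NE.
apply: le_trans hS _.
apply: le_trans (ler_wpM2l B0 optge).
have -> : 4%:R * W / alpha * (alpha * (n%:R - 1) / 2) = 2 * W * (n%:R - 1).
  by field; rewrite gt_eqF.
have key : forall W1 N : R, 0 <= W1 -> 2 <= N -> N * W1 <= 2 * W1 * (N - 1)
  by move=> W1 N h1 h2; nra.
exact: key.
Qed.
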